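(* Let $(M,d)$ be a complete geodesic space satisfying the non-expansive projection property $(NE)$: for all closed weakly convex sets $C\subset M$ and all $x,y\in M$, $d(x_C,y_C)\le d(x,y)$ whenever $x_C\in\pi_C(x)$ and $y_C\in\pi_C(y)$. Then $(M,d)$ satisfies the symmetric orthogonality property $(SO)$.
   Context: Geodesics are maps $\gamma:[0,1]\to M$ with $d(\gamma_t,\gamma_s)=|t-s|d(\gamma_0,\gamma_1)$. For geodesics with $p=\gamma_0=\eta_0$, $\gamma\perp_p\eta$ means $d(p,\gamma_t)\le d(\eta_s,\gamma_t)$ for all $s,t\in[0,1]$; $(SO)$ means $\gamma\perp_p\eta$ implies $\eta\perp_p\gamma$ for all such geodesics. $C$ is weakly convex if any two of its points are joined by some geodesic in $C$. $\pi_C(x)$ is the set of points of $C$ at distance $\inf_{z\in C}d(x,z)$ from $x$. *)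

(* Defs.v *)
From Stdlib Require Import Reals.
Open Scope R_scope.

Section MetricDefs.
Variables (M : Type) (d : M -> M -> R).

Definition is_metric : Prop :=
  (forall x y, 0 <= d x y) /\
  (forall x y, d x y = 0 <-> x = y) /\
  (forall x y, d x y = d y x) /\
  (forall x y z, d x z <= d x y + d y z).

Definition in01 (t : R) : Prop := 0 <= t <= 1.

(* a geodesic: a map [0,1] -> M (represented by R -> M, only values on [0,1]
   matter) with d(g t, g s) = |t - s| d(g 0, g 1) *)
Definition geodesic (g : R -> M) : Prop :=
  forall t s, in01 t -> in01 s -> d (g t) (g s) = Rabs (t - s) * d (g 0) (g 1).

Definition geodesic_space : Prop :=
  forall x y, exists g, geodesic g /\ g 0 = x /\ g 1 = y.

Definition cauchy_seq (u : nat -> M) : Prop :=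
  forall eps, 0 < eps -> exists N, forall m n, (N <= m)%nat -> (N <= n)%nat ->
    d (u m) (u n) < eps.

Definition converges_to (u : nat -> M) (l : M) : Prop :=
  forall eps, 0 < eps -> exists N, forall n, (N <= n)%nat -> d (u n) l < eps.

Definition complete : Prop :=
  forall u, cauchy_seq u -> exists l, converges_to u l.

Definition closed_set (C : M -> Prop) : Prop :=
  forall x, ~ C x -> exists r, 0 < r /\ forall y, d x y < r -> ~ C y.

Definition weakly_convex (C : M -> Prop) : Prop :=
  forall x y, C x -> C y ->
    exists g, geodesic g /\ g 0 = x /\ g 1 = y /\ (forall t, in01 t -> C (g t)).

Definition metric_proj (C : M -> Prop) (x z : M) : Prop :=
  C z /\ forall w, C w -> d x z <= d x w.

Definition NE_property : Prop :=
  forall C : M -> Prop, closed_set C -> weakly_convex C ->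
    forall x y xC yC, metric_proj C x xC -> metric_proj C y yC ->
      d xC yC <= d x y.

Definition orth (p : M) (gam eta : R -> M) : Prop :=
  forall s t, in01 s -> in01 t -> d p (gam t) <= d (eta s) (gam t).

Definition SO_property : Prop :=
  forall (p : M) (gam eta : R -> M), geodesic gam -> geodesic eta ->
    gam 0 = p -> eta 0 = p -> orth p gam eta -> orth p eta gam.

End MetricDefs.

(* Main.v *)
From Pilot Require Import Defs.
From Stdlib Require Import Reals Lra Psatz.
Open Scope R_scope.

Definition clamp (u : R) : R := Rmax 0 (Rmin 1 u).

Lemma clamp_in01 u : in01 (clamp u).
Proof. unfold clamp, in01, Rmax, Rmin; repeat destruct Rle_dec; lra. Qed.

Lemma clamp_id u : in01 u -> clamp u = u.
Proof. unfold clamp, in01, Rmax, Rmin; intros; repeat destruct Rle_dec; lra. Qed.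

Lemma clamp_lip u v : Rabs (clamp u - clamp v) <= Rabs (u - v).
Proof.
  unfold clamp, Rmax, Rmin; repeat destruct Rle_dec;
  unfold Rabs; repeat destruct Rcase_abs; lra.
Qed.

Section S.
Variables (M : Type) (d : M -> M -> R).
Hypothesis Hm : is_metric M d.

Lemma eta_closed (eta : R -> M) : geodesic M d eta ->
  Pilot.Defs.closed_set M d (fun z => exists u, in01 u /\ z = eta u).
Proof.
  destruct Hm as [H0 [Hz [Hs Ht]]].
  intros Hg x Hx.
  set (D := d (eta 0) (eta 1)).
  assert (HD : 0 <= D) by apply H0.
  set (f := fun u => d x (eta (clamp u))).
  assert (Hc : forall c, continuity_pt f c).
  { intros c eps Heps. exists (eps / (D + 1)). split.
    - apply Rdiv_lt_0_compat; lra.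
    - intros y [_ Hy]. simpl in *. unfold R_dist in *. unfold f.
      assert (Hgd := Hg (clamp y) (clamp c) (clamp_in01 y) (clamp_in01 c)).
      fold D in Hgd.
      assert (Hl := clamp_lip y c).
      assert (A1 := Ht x (eta (clamp c)) (eta (clamp y))).
      assert (A2 := Ht x (eta (clamp y)) (eta (clamp c))).
      assert (S1 := Hs (eta (clamp y)) (eta (clamp c))).
      assert (B : Rabs (clamp y - clamp c) * D < eps).
      { apply Rle_lt_trans with (Rabs (y - c) * D).
        - apply Rmult_le_compat_r; lra.
        - apply Rle_lt_trans with (Rabs (y - c) * (D + 1)).
          + assert (0 <= Rabs (y - c)) by apply Rabs_pos. nra.
          + apply Rlt_le_trans with (eps / (D + 1) * (D + 1)).
            * apply Rmult_lt_compat_r; lra.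
            * right; field; lra. }
      unfold Rabs at 1; destruct Rcase_abs; lra. }
  destruct (continuity_ab_min f 0 1 ltac:(lra) (fun c _ => Hc c)) as [u0 [Hmin Hu0]].
  assert (Hpos : 0 < f u0).
  { destruct (H0 x (eta (clamp u0))) as [Hp|Hp]; [exact Hp|].
    exfalso. apply Hx. exists (clamp u0). split; [apply clamp_in01|].
    apply Hz. unfold f in Hp. lra. }
  exists (f u0). split; [exact Hpos|].
  intros y Hy [u [Hu ->]].
  assert (Hmu := Hmin u Hu). unfold f in Hmu. rewrite (clamp_id u Hu) in Hmu.
  unfold f in Hy. lra.
Qed.

Lemma eta_convex (eta : R -> M) : geodesic M d eta ->
  weakly_convex M d (fun z => exists u, in01 u /\ z = eta u).
Proof.
  intros Hg x y [a [Ha ->]] [b [Hb ->]].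
  assert (Hin : forall t, in01 t -> in01 (a + t * (b - a))).
  { unfold in01 in *; intros t Htt; split; nra. }
  exists (fun t => eta (a + t * (b - a))).
  assert (E0 : a + 0 * (b - a) = a) by ring.
  assert (E1 : a + 1 * (b - a) = b) by ring.
  split; [|split; [|split]].
  - intros t s Ht Hs. rewrite Hg by auto. rewrite E0, E1, (Hg a b Ha Hb).
    replace (a + t * (b - a) - (a + s * (b - a))) with ((t - s) * (b - a)) by ring.
    replace (a - b) with (-(b - a)) by ring.
    rewrite Rabs_mult, Rabs_Ropp. ring.
  - now rewrite E0.
  - now rewrite E1.
  - intros t Ht. exists (a + t * (b - a)). auto.
Qed.
End S.

Theorem proposition17 (M : Type) (d : M -> M -> R) :
  is_metric M d -> complete M d -> geodesic_space M d -> NE_property M d ->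
  SO_property M d.
Proof.
  intros Hm _ _ HNE p gam eta Hgam Heta Hg0 He0 Horth s t Hs Ht.
  pose proof Hm as [H0 [Hz [Hsy Htr]]].
  set (C := fun z => exists u, in01 u /\ z = eta u).
  apply (HNE C (eta_closed M d Hm eta Heta) (eta_convex M d eta Heta)
           (gam s) (eta t) p (eta t)).
  - split.
    + exists 0. split; [unfold in01; lra | auto].
    + intros w [u [Hu ->]]. rewrite (Hsy (gam s) p), (Hsy (gam s) (eta u)).
      apply Horth; auto.
  - split.
    + exists t; auto.
    + intros w _. replace (d (eta t) (eta t)) with 0 by (symmetry; apply Hz; auto).
      apply H0.
Qed.
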